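(* Let $n \ge 1$ be an integer and let $k$ be an integer with $0 \le k \le \lfloor n/2 \rfloor$. Let $b_k \in B_{2n}$ be the $k$-th decreasing product component. Then the left and right derived braids of $b_k$ coincide: $L(b_k) = R(b_k)$ in $B_{3n}$.
   Context: $B_m$ denotes the Artin braid group on $m$ strands, with standard generators $\sigma_1,\dots,\sigma_{m-1}$ ($\sigma_i$ crosses the strands in positions $i$ and $i+1$; all generators are taken with the same crossing type). Braids are drawn top to bottom, and the product $xy$ means $x$ followed (below) by $y$. For braids $x\in B_a$, $y \in B_b$, $x\otimes y \in B_{a+b}$ denotes placing $y$ to the right of $x$; $\mathrm{id}_m$ is the trivial braid on $m$ strands. Cabling: given $y \in B_m$ and positive integers $w_1,\dots,w_m$ with $\sum w_i = N$, the cabled braid $y^{(w_1,\dots,w_m)} \in B_N$ is obtained by replacing the strand of $y$ starting at position $i$ (at the top) by a ribbon of $w_i$ parallel adjacent strands (a ''$w_i$-ribbon'') that follows that strand throughout. Derived braids: for $x \in B_{2n}$, the left derived braid is $Lx = (x\otimes \mathrm{id}_n)\cdot x^{(2,\dots,2,1,\dots,1)} \in B_{3n}$, where there are $n$ entries $2$ followed by $n$ entries $1$; i.e. one attaches $n$ identity strands on the right of $x$, then at the bottom of $x$ groups its $2n$ strands into $n$ consecutive pairs (2-ribbons), and braids the resulting $2n$ objects ($n$ 2-ribbons followed by $n$ single strands) according to $x$. The right derived braid is $Rx = (\mathrm{id}_n \otimes x)\cdot x^{(1,\dots,1,2,\dots,2)} \in B_{3n}$ ($n$ entries $1$ followed by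 $n$ entries $2$), i.e. the same construction with the $n$ identity strands attached on the left. (For $n=1$, $x=\sigma_1$, the equation $Lx=Rx$ is the Yang–Baxter equation $\sigma_1\sigma_2\sigma_1=\sigma_2\sigma_1\sigma_2$.) Decreasing product components in $B_{2n}$: $b_0 = \sigma_1^{(n,n)}$, the braid in which the $n$-ribbon of strands $1,\dots,n$ crosses the $n$-ribbon of strands $n+1,\dots,2n$; and for $1 \le k \le \lfloor n/2\rfloor$, $b_k = \sigma_2^{(k,\,n-k,\,n-k,\,k)}$, where $\sigma_2\in B_4$, i.e. with strands grouped into consecutive ribbons of widths $k, n-k, n-k, k$, the two middle $(n-k)$-ribbons cross once and the outer $k$-ribbons are identity. *)

(* Defs.v *)
From mathcomp Require Import all_boot.
Set Implicit Arguments. Unset Strict Implicit. Unset Printing Implicit Defensive.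

(* A braid word: letter (i, true) = sigma_i, (i, false) = sigma_i^{-1}
   (i is 1-based). Words are read left to right = top to bottom. *)
Definition letter := (nat * bool)%type.
Definition word := seq letter.

Inductive braid_rel (m : nat) : word -> word -> Prop :=
| br_cancel i s : 0 < i -> i < m -> braid_rel m [:: (i, s); (i, ~~ s)] [::]
| br_far i j : 0 < i -> j < m -> i.+1 < j ->
    braid_rel m [:: (i, true); (j, true)] [:: (j, true); (i, true)]
| br_yb i : 0 < i -> i.+1 < m ->
    braid_rel m [:: (i, true); (i.+1, true); (i, true)]
                [:: (i.+1, true); (i, true); (i.+1, true)].

Inductive braid_eq (m : nat) : word -> word -> Prop :=
| beq_rel x y u v : braid_rel m u v -> braid_eq m (x ++ u ++ y) (x ++ v ++ y)
| beq_refl u : braid_eq m u u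
| beq_sym u v : braid_eq m u v -> braid_eq m v u
| beq_trans u v w : braid_eq m u v -> braid_eq m v w -> braid_eq m u w.

Definition winv (w : word) : word := rev (map (fun l => (l.1, ~~ l.2)) w).

(* Positive crossing of an a-ribbon (positions p..p+a-1) over the b-ribbon
   immediately to its right; all a*b crossings are positive. *)
Definition ribbon (p a b : nat) : word :=
  flatten [seq [seq ((p + j + t)%N, true) | t <- iota 0 b] | j <- rev (iota 0 a)].

Definition swap_w (ws : seq nat) (i : nat) : seq nat :=
  set_nth 0 (set_nth 0 ws i.-1 (nth 0 ws i)) i (nth 0 ws i.-1).

(* Cabling: ws = current widths of the ribbons, listed by position. *)
Fixpoint cable_aux (ws : seq nat) (w : word) : word :=
  match w with
  | [::] => [::]
  | (i, s) :: w' =>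
      let p := (sumn (take i.-1 ws)).+1 in
      let a := nth 0 ws i.-1 in
      let b := nth 0 ws i in
      (if s then ribbon p a b else winv (ribbon p b a)) ++ cable_aux (swap_w ws i) w'
  end.

Definition cable (y : word) (ws : seq nat) : word := cable_aux ws y.

(* x (x) id : same word; id_n (x) x : indices shifted by n *)
Definition shift (n : nat) (x : word) : word := [seq ((l.1 + n)%N, l.2) | l <- x].

Definition Lder (n : nat) (x : word) : word := x ++ cable x (nseq n 2 ++ nseq n 1).
Definition Rder (n : nat) (x : word) : word := shift n x ++ cable x (nseq n 1 ++ nseq n 2).

Definition bcomp (n k : nat) : word :=
  if k == 0 then cable [:: (1, true)] [:: n; n]
  else cable [:: (2, true)] [:: k; (n - k)%N; (n - k)%N; k].

Example yb_check : Lder 1 (bcomp 1 0) = [:: (1,true); (2,true); (1,true)]. Proof. by []. Qed.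
Example yb_check2 : Rder 1 (bcomp 1 0) = [:: (2,true); (1,true); (2,true)]. Proof. by []. Qed.
Example rib_check : cable [:: (1,true)] [:: 2; 1] = [:: (2,true); (1,true)]. Proof. by []. Qed.

(* Main.v *)
Require Import Defs.
From mathcomp Require Import all_boot zify.
Set Implicit Arguments. Unset Strict Implicit. Unset Printing Implicit Defensive.

Definition row (r b : nat) : word := [seq ((r + t)%N, true) | t <- iota 0 b].
Definition inr (lo hi : nat) (w : word) :=
  all (fun l : letter => (lo <= l.1 <= hi) && l.2) w.

Section B.
Variable M : nat.
Local Notation beq := (braid_eq M).

Lemma beq_ctx x y u v : beq u v -> beq (x ++ u ++ y) (x ++ v ++ y).
Proof.
elim=> {u v} [x0 y0 u v H| u | u v _ IH | u v w _ IH1 _ IH2].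
- have -> : x ++ (x0 ++ u ++ y0) ++ y = (x ++ x0) ++ u ++ (y0 ++ y) by rewrite !catA.
  have -> : x ++ (x0 ++ v ++ y0) ++ y = (x ++ x0) ++ v ++ (y0 ++ y) by rewrite !catA.
  exact: beq_rel.
- exact: beq_refl.
- exact: beq_sym.
- exact: beq_trans IH1 IH2.
Qed.

Lemma beq_cat u u' v v' : beq u u' -> beq v v' -> beq (u ++ v) (u' ++ v').
Proof.
move=> H1 H2; apply: (@beq_trans _ _ (u' ++ v)).
  by have /= := beq_ctx [::] v H1.
by have := beq_ctx u' [::] H2; rewrite !cats0.
Qed.

Lemma beqL x u v : beq u v -> beq (x ++ u) (x ++ v).
Proof. by move=> H; apply: beq_cat => //; exact: (beq_refl M _). Qed.
Lemma beqR x u v : beq u v -> beq (u ++ x) (v ++ x).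
Proof. by move=> H; apply: beq_cat => //; exact: (beq_refl M _). Qed.

Lemma beq_of_rel u v : braid_rel M u v -> beq u v.
Proof. by move=> H; have := beq_rel [::] [::] H; rewrite /= !cats0. Qed.

Lemma far1 i j : 0 < i -> i.+1 < j -> j < M ->
  beq [:: (i,true); (j,true)] [:: (j,true); (i,true)].
Proof. by move=> *; apply: beq_of_rel; apply: br_far. Qed.

Lemma yb1 i : 0 < i -> i.+1 < M ->
  beq [:: (i,true); (i.+1,true); (i,true)] [:: (i.+1,true); (i,true); (i.+1,true)].
Proof. by move=> *; apply: beq_of_rel; apply: br_yb. Qed.

Lemma far_letter i v lo hi : 0 < i -> inr lo hi v -> i.+1 < lo -> hi < M ->
  beq ((i,true) :: v) (v ++ [:: (i,true)]).
Proof.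
move=> Hi; elim: v => [|[j s] v IH] /=.
  move=> *; exact: (beq_refl M).
move=> /andP [/andP [/andP [H1 H2] ->] Hv] Hl Hh.
apply: (@beq_trans _ _ ((j,true) :: (i,true) :: v)).
  by have := beqR v (far1 Hi (leq_trans Hl H1) (leq_ltn_trans H2 Hh)).
by have := beqL [:: (j,true)] (IH Hv Hl Hh).
Qed.

Lemma far_comm u v lo1 hi1 lo2 hi2 : inr lo1 hi1 u -> inr lo2 hi2 v ->
  0 < lo1 -> hi1.+1 < lo2 -> hi2 < M -> beq (u ++ v) (v ++ u).
Proof.
move=> + Hv H0 H1 H2; elim: u => [|[i s] u IH] /=; first by move=> _; rewrite cats0; exact: (beq_refl M _).
move=> /andP [/andP [/andP [Hi1 Hi2] ->] Hu].
apply: (@beq_trans _ _ ((i,true) :: v ++ u)).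
  by have := beqL [:: (i,true)] (IH Hu).
apply: (@beq_trans _ _ ((v ++ [:: (i,true)]) ++ u)).
  have Ha : 0 < i by lia.
  have Hb : i.+1 < lo2 by lia.
  by have := beqR u (far_letter Ha Hv Hb H2).
by rewrite -catA; exact: (beq_refl M _).
Qed.


Lemma ribbon_S p a b : ribbon p a.+1 b = row (p + a) b ++ ribbon p a b.
Proof. by rewrite /ribbon -addn1 iotaD rev_cat /= add0n. Qed.

Lemma ribbon_0 p b : ribbon p 0 b = [::].
Proof. by []. Qed.

Lemma ribbon_a0 p a : ribbon p a 0 = [::].
Proof. by elim: a => [|a IH] //; rewrite ribbon_S IH. Qed.

Lemma row_cat q b1 b2 : row q (b1 + b2) = row q b1 ++ row (q + b1) b2.
Proof.
rewrite /row iotaD map_cat; congr (_ ++ _).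
rewrite add0n -{1}(addn0 b1) iotaDl -map_comp; apply: eq_map => t /=; congr pair; lia.
Qed.

Lemma row_cons r b : row r b.+1 = (r, true) :: row r.+1 b.
Proof. by rewrite -add1n row_cat /= addn0 addn1. Qed.

Lemma ribbon_lsplit p a b a1 a2 p2 : a = a1 + a2 -> p2 = p + a1 ->
  ribbon p a b = ribbon p2 a2 b ++ ribbon p a1 b.
Proof.
move=> -> ->; elim: a2 => [|a2 IH]; first by rewrite addn0.
by rewrite addnS !ribbon_S IH catA addnA.
Qed.

Lemma inr_row lo hi r b : lo <= r -> r + b <= hi.+1 -> inr lo hi (row r b).
Proof.
move=> H1 H2; apply/allP => l /mapP [t]; rewrite mem_iota => /andP [_ Ht] -> /=.
rewrite andbT; apply/andP; split; lia.
Qed.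

Lemma inr_cat lo hi u v : inr lo hi u -> inr lo hi v -> inr lo hi (u ++ v).
Proof. by rewrite /inr all_cat => -> ->. Qed.

Lemma inr_ribbon lo hi p a b : lo <= p -> p + a + b <= hi.+2 -> inr lo hi (ribbon p a b).
Proof.
move=> H1; elim: a => [|a IH] H2; first by [].
rewrite ribbon_S; apply: inr_cat; last by apply: IH; lia.
apply: inr_row; lia.
Qed.

Lemma shift_cat n u v : shift n (u ++ v) = shift n u ++ shift n v.
Proof. by rewrite /shift map_cat. Qed.

Lemma shift_ribbon n p a b : shift n (ribbon p a b) = ribbon (p + n) a b.
Proof.
elim: a => [|a IH] //; rewrite !ribbon_S shift_cat IH; congr (_ ++ _).
rewrite /shift /row -map_comp; apply: eq_map => t /=; congr pair; lia.
Qed.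

Definition unsh (a : nat) (w : word) : word := [seq ((l.1 - a)%N, l.2) | l <- w].

Lemma unsh_ribbon a q b c : unsh a (ribbon (q + a) b c) = ribbon q b c.
Proof.
have uc : forall u v, unsh a (u ++ v) = unsh a u ++ unsh a v by move=> u v; rewrite /unsh map_cat.
elim: b => [|b IH] //; rewrite !ribbon_S uc IH; congr (_ ++ _).
rewrite /row /unsh -map_comp; apply: eq_map => t /=; congr pair; lia.
Qed.

Ltac refl := exact: (beq_refl M _).
Ltac via X := apply: (@beq_trans _ _ X).

Lemma row_slide q b i : 0 < q -> q <= i -> i.+2 <= q + b -> q + b <= M ->
  beq ((i.+1,true) :: row q b) (row q b ++ [:: (i,true)]).
Proof.
move=> H0 H1 H2 H3.
have -> : row q b = row q (i - q) ++ [:: (i,true); (i.+1,true)] ++ row i.+2 (q + b - i.+2).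
  rewrite {1}(_ : b = (i - q) + (2 + (q + b - i.+2))); last by lia.
  by rewrite row_cat row_cat (subnKC H1) /row /= addn0 addn1 addn2.
set R1 := row q (i - q); set R2 := row i.+2 _.
have iR1 : inr q i.-1 R1 by apply: inr_row; lia.
have iR2 : inr i.+2 (q + b).-1 R2 by apply: inr_row; lia.
via ((R1 ++ [:: (i.+1,true)]) ++ [:: (i,true); (i.+1,true)] ++ R2).
  rewrite -cat1s catA; apply: beqR; apply: beq_sym.
  apply: (far_comm (lo1 := q) (hi1 := i.-1) (lo2 := i.+1) (hi2 := i.+1)) => //=; try lia.
rewrite -catA.
via (R1 ++ [:: (i,true); (i.+1,true); (i,true)] ++ R2).
  apply: beqL. have Hy : 0 < i by lia. have Hy2 : i.+1 < M by lia.
  exact: (beqR R2 (beq_sym (yb1 Hy Hy2))).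
rewrite -!catA.
apply: beqL; apply: (beqL [:: (i,true); (i.+1,true)]).
apply: (far_letter (lo := i.+2) (hi := (q + b).-1)) => //; lia.
Qed.

Lemma ribbon_slide1 p a b j : 0 < p -> p + a <= j -> j.+2 <= p + a + b -> p + a + b <= M.+1 ->
  beq ((j,true) :: ribbon p a b) (ribbon p a b ++ [:: (j - a, true)]).
Proof.
move=> H0; elim: a j => [|a IH] j H1 H2 H3.
  by rewrite ribbon_0 subn0; refl.
rewrite ribbon_S.
have Hj : j = j.-1.+1 by lia.
via ((row (p + a) b ++ [:: (j.-1,true)]) ++ ribbon p a b).
  rewrite -cat_cons; apply: beqR; rewrite {1}Hj; apply: row_slide; lia.
rewrite -catA -catA /=; apply: beqL.
have -> : j - a.+1 = j.-1 - a by lia.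
apply: IH; lia.
Qed.

Lemma ribbon_slide p a b w : 0 < p -> p + a + b <= M.+1 -> inr (p + a) (p + a + b - 2) w ->
  beq (w ++ ribbon p a b) (ribbon p a b ++ unsh a w).
Proof.
move=> H0 HM; elim: w => [|[j s] w IH] /=.
  by move=> _; rewrite cats0; refl.
move=> /andP [/andP [/andP [Hj1 Hj2] ->] Hw].
via ((j,true) :: ribbon p a b ++ unsh a w).
  by apply: (beqL [:: (j,true)]); apply: IH.
rewrite -cat_cons.
via ((ribbon p a b ++ [:: (j - a, true)]) ++ unsh a w).
  apply: beqR; apply: ribbon_slide1 => //; lia.
by rewrite -catA; refl.
Qed.

Lemma ribbon_rsplit p a b b1 b2 p2 : 0 < p -> b = b1 + b2 -> p2 = p + b1 -> p + a + b <= M.+1 ->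
  beq (ribbon p a b) (ribbon p a b1 ++ ribbon p2 a b2).
Proof.
move=> H0 -> ->; elim: a => [|a IH] HM; first by rewrite !ribbon_0; refl.
rewrite !ribbon_S row_cat -!catA.
via (row (p + a) b1 ++ row (p + a + b1) b2 ++ ribbon p a b1 ++ ribbon (p + b1) a b2).
  apply: beqL; apply: beqL; apply: IH; lia.
apply: beqL; rewrite !catA; apply: beqR.
rewrite (addnAC p b1 a).
apply: beq_sym.
case: (posnP b1) => [->|Hb1]; first by rewrite ribbon_a0 cats0; refl.
apply: (far_comm (lo1 := p) (hi1 := p + a + b1 - 2) (lo2 := p + a + b1) (hi2 := p + a + b1 + b2 - 1)).
- apply: inr_ribbon; lia.
- apply: inr_row; lia.
- done.
- lia.
- lia.
Qed.

Lemma ribbon_yb q a b c qb qa qc : 0 < q -> qb = q + b -> qa = q + a -> qc = q + c ->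
  q + a + b + c <= M.+1 ->
  beq (ribbon q a b ++ ribbon qb a c ++ ribbon q b c) (ribbon qa b c ++ ribbon q a c ++ ribbon qc a b).
Proof.
move=> H0 Hb Ha Hc HM.
via (ribbon q a (b + c) ++ ribbon q b c).
  rewrite catA; apply: beqR; apply: beq_sym; apply: ribbon_rsplit => //; lia.
via (ribbon qa b c ++ ribbon q a (c + b)); last first.
  apply: beqL; apply: ribbon_rsplit => //; lia.
rewrite (addnC c b).
apply: beq_sym.
have -> : ribbon q b c = unsh a (ribbon qa b c) by rewrite Ha unsh_ribbon.
apply: ribbon_slide => //; first lia.
rewrite Ha; apply: inr_ribbon; lia.
Qed.

End B.

Definition fin (ws : seq nat) (u : word) := foldl (fun ws l => swap_w ws l.1) ws u.

Lemma cable_aux_cat ws u v : cable_aux ws (u ++ v) = cable_aux ws u ++ cable_aux (fin ws u) v.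
Proof.
elim: u ws => [|[i s] u IH] ws //=.
by rewrite IH catA.
Qed.

Lemma swap_w_cat (L T : seq nat) x y : swap_w (L ++ x :: y :: T) (size L).+1 = L ++ y :: x :: T.
Proof.
elim: L => [|a L IH] //=.
move: IH; rewrite /swap_w /= => IH.
by case: (size L) IH => [|s] /= IH; rewrite IH.
Qed.

Lemma cable_row M V : forall L w R q, q = (size L).+1 -> sumn L + w + sumn V <= M ->
  braid_eq M (cable_aux (L ++ w :: V ++ R) (row q (size V))) (ribbon (sumn L).+1 w (sumn V))
  /\ fin (L ++ w :: V ++ R) (row q (size V)) = L ++ V ++ w :: R.
Proof.
elim: V => [|v V IH] L w R q Hq HM.
  by split; [rewrite ribbon_a0; exact: beq_refl | done].
rewrite row_cons Hq.
have E1 : take (size L) (L ++ w :: (v :: V) ++ R) = L by rewrite take_size_cat.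
have E2 : nth 0 (L ++ w :: (v :: V) ++ R) (size L) = w by rewrite nth_cat ltnn subnn.
have E3 : nth 0 (L ++ w :: (v :: V) ++ R) (size L).+1 = v.
  by rewrite nth_cat ltnNge leqnSn /= subSn // subnn.
have E4 : swap_w (L ++ w :: (v :: V) ++ R) (size L).+1 = rcons L v ++ w :: V ++ R.
  by rewrite /= swap_w_cat cat_rcons.
have Hs : (size L).+2 = (size (rcons L v)).+1 by rewrite size_rcons.
have HM' : sumn (rcons L v) + w + sumn V <= M by move: HM; rewrite sumn_rcons /=; lia.
have [IH1 IH2] := IH (rcons L v) w R (size L).+2 Hs HM'.
split; last by rewrite /= E4 IH2 cat_rcons.
rewrite [cable_aux _ (_ :: _)]/= E1 E2 E3 E4.
apply: (@beq_trans _ _ (ribbon (sumn L).+1 w v ++ ribbon (sumn (rcons L v)).+1 w (sumn V))).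
  by apply: beqL.
apply: beq_sym; apply: ribbon_rsplit => //=; rewrite ?sumn_rcons; lia.
Qed.

Lemma cable_ribbon M W : forall L V R q a b p' a' b', q = (size L).+1 -> a = size W ->
  b = size V -> p' = (sumn L).+1 -> a' = sumn W -> b' = sumn V ->
  sumn L + sumn W + sumn V <= M ->
  braid_eq M (cable_aux (L ++ W ++ V ++ R) (ribbon q a b)) (ribbon p' a' b').
Proof.
elim/last_ind: W => [|W w IH] L V R q a b p' a' b' Hq Ha Hb Hp Ha' Hb' HM.
  by rewrite Ha Ha' /=; exact: beq_refl.
rewrite Ha size_rcons ribbon_S cable_aux_cat.
have Ews : L ++ rcons W w ++ V ++ R = (L ++ W) ++ w :: V ++ R by rewrite cat_rcons catA.
have Hq2 : q + size W = (size (L ++ W)).+1 by rewrite size_cat Hq.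
have HM2 : sumn (L ++ W) + w + sumn V <= M by move: HM; rewrite sumn_cat sumn_rcons; lia.
have [C1 C2] := cable_row R Hq2 HM2.
rewrite Ews Hb C2 -catA.
rewrite Ha' sumn_rcons (ribbon_lsplit b' (a1 := sumn W) (a2 := w) (p2 := p' + sumn W)) //.
apply: beq_cat.
  by rewrite catA Hb' Hp addSn -sumn_cat.
rewrite -catA; apply: (IH L V (w :: R)) => //; move: HM; rewrite sumn_rcons; lia.
Qed.

Lemma core k m : k <= m -> 0 < m ->
  braid_eq (3 * (k + m))
    (ribbon k.+1 m m ++ ribbon (k + k).+1 (m + m) m)
    (ribbon (k + k + m).+1 m m ++ ribbon k.+1 m (m + m)).
Proof.
move=> Hkm Hm; set M := 3 * (k + m).
set X1 := ribbon k.+1 m k.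
set X2 := ribbon (k + k).+1 m (m - k).
set D := ribbon (k + m + m).+1 k m.
set X4 := ribbon (k + m).+1 m m.
set X5 := ribbon (k + k).+1 (m - k) m.
set Y1 := ribbon (k + k + m).+1 (m - k) m.
set Y2 := ribbon (k + k).+1 m m.
set Y3 := ribbon (k + k + m).+1 m (m - k).
have E1 : ribbon (k + k).+1 (m + m) m = ribbon (k + m).+1 (k + m) m ++ X5.
  by apply: ribbon_lsplit; lia.
have E2 : ribbon (k + m).+1 (k + m) m = D ++ X4 by apply: ribbon_lsplit; lia.
have E3 : ribbon (k + k + m).+1 m m = D ++ Y1 by apply: ribbon_lsplit; lia.
have iX1 : inr k.+1 (k + k + m).-1 X1 by apply: inr_ribbon; lia.
have iX2 : inr (k + k).+1 (k + m + m).-1 X2 by apply: inr_ribbon; lia.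
have iD : inr (k + m + m).+1 (M.-1) D by apply: inr_ribbon; lia.
have iY1 : inr (k + k + m).+1 (M.-1) Y1 by apply: inr_ribbon; lia.
apply: (@beq_trans _ _ (X1 ++ D ++ Y1 ++ Y2 ++ Y3)).
- rewrite E1 E2.
  apply: (@beq_trans _ _ ((X1 ++ X2) ++ (D ++ X4) ++ X5)).
    by apply: beqR; apply: ribbon_rsplit; lia.
  rewrite -!catA; apply: beqL.
  apply: (@beq_trans _ _ ((D ++ X2) ++ X4 ++ X5)).
    rewrite catA; apply: beqR.
    apply: (far_comm iX2 iD); lia.
  rewrite -catA; apply: beqL.
  apply: ribbon_yb; lia.
- apply: beq_sym; rewrite E3.
  apply: (@beq_trans _ _ ((D ++ Y1) ++ X1 ++ Y2 ++ Y3)).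
    apply: beqL.
    apply: (@beq_trans _ _ (X1 ++ ribbon (k + k).+1 m (m + (m - k)))).
      by apply: ribbon_rsplit; lia.
    by apply: beqL; apply: ribbon_rsplit; lia.
  apply: (@beq_trans _ _ ((D ++ X1) ++ Y1 ++ Y2 ++ Y3)).
    rewrite -!catA; apply: beqL; rewrite !catA; apply: beqR; apply: beqR.
    apply: beq_sym; apply: (far_comm iX1 iY1); lia.
  rewrite -!catA !catA; apply: beqR; apply: beqR; apply: beqR.
  apply: beq_sym; apply: (far_comm iX1 iD); lia.
Qed.

Lemma bcompE n k : bcomp n k = ribbon k.+1 (n - k) (n - k).
Proof. by rewrite /bcomp; case: k => [|k] /=; rewrite ?cats0 ?subn0 ?addn0. Qed.

Unset Implicit Arguments.

Theorem proposition1 (n k : nat) :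
  1 <= n -> k <= n./2 ->
  braid_eq (3 * n) (Lder n (bcomp n k)) (Rder n (bcomp n k)).
Proof.
move=> Hn Hk.
have [m Em] : exists m, n = k + m by exists (n - k); lia.
have Hkm : k <= m by move: Hk; rewrite Em; lia.
have Hm : 0 < m by lia.
subst n.
have N1 : nseq (k + m) 1 = nseq m 1 ++ nseq k 1 by rewrite addnC nseqD.
have N2 : nseq (k + m) 2 = nseq m 2 ++ nseq k 2 by rewrite addnC nseqD.
rewrite /Lder /Rder /cable bcompE addKn shift_ribbon.
apply: (@beq_trans _ _ (ribbon k.+1 m m ++ ribbon (k + k).+1 (m + m) m)).
  apply: beqL; rewrite N1 nseqD -!catA.
  apply: cable_ribbon; rewrite ?size_nseq ?sumn_nseq //; lia.
apply: (@beq_trans _ _ (ribbon (k + k + m).+1 m m ++ ribbon k.+1 m (m + m))).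
  exact: core.
have -> : k.+1 + (k + m) = (k + k + m).+1 by lia.
apply: beqL; rewrite N2 nseqD -!catA; apply: beq_sym.
apply: cable_ribbon; rewrite ?size_nseq ?sumn_nseq //; lia.
Qed.
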